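(* If $\mathbb{A}$ is a $C$-asymptotic set, then $\mathbb{A}$ is a $C$-pseudo-cone and $$\mathbb{A}=\bigcap_{v\in\Omega_{C^\circ}}H^-(v,h_{\mathbb{A}}(v)).$$
   Context: $C\subset\mathbb{R}^n$ ($n\ge2$) is a pointed closed convex cone with nonempty interior; $C^\circ=\{y:\langle x,y\rangle\le0\ \forall x\in C\}$; $\Omega_{C^\circ}=\mathbb{S}^{n-1}\cap\operatorname{int}C^\circ$. A $C$-asymptotic set is an unbounded closed convex set $\mathbb{A}\subset C$ with nonempty interior and $o\notin\mathbb{A}$ such that $\lim_{x\in\partial\mathbb{A},|x|\to\infty}d(x,\partial C)=0$. A $C$-pseudo-cone is a nonempty closed convex set $E$ with $o\notin E$, $\lambda x\in E$ for all $x\in E,\lambda\ge1$, and recession cone $\{x:E+x\subset E\}$ equal to $C$. $h_{\mathbb{A}}(v)=\sup_{x\in\mathbb{A}}\langle x,v\rangle$ and $H^-(v,\alpha)=\{x:\langle x,v\rangle\le\alpha\}$. *)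

(* Defs.v *)
From HB Require Import structures.
From mathcomp Require Import all_boot all_order all_algebra.
From mathcomp Require Import all_classical all_reals all_analysis.
Set Implicit Arguments. Unset Strict Implicit. Unset Printing Implicit Defensive.
Import Order.TTheory GRing.Theory Num.Theory.
Import numFieldNormedType.Exports.
Local Open Scope classical_set_scope.
Local Open Scope ring_scope.

Section Defs.
Variables (R : realType) (n : nat).
Notation V := 'rV[R]_n.

Definition dotp (x y : V) : R := \sum_(i < n) x ord0 i * y ord0 i.
Definition enorm (x : V) : R := Num.sqrt (dotp x x).

Definition bdry (A : set V) : set V := closure A `\` interior A.

Definition edist (x : V) (B : set V) : R := inf [set enorm (x - y) | y in B].

Definition convex_set (A : set V) : Prop :=
  forall x y, A x -> A y -> forall t : R, 0 <= t <= 1 -> A (t *: x + (1 - t) *: y).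

Definition is_cone (C : set V) : Prop :=
  C 0 /\ (forall x (l : R), C x -> 0 <= l -> C (l *: x)) /\
  (forall x y, C x -> C y -> C (x + y)).
Definition pointed (C : set V) : Prop := forall x, C x -> C (- x) -> x = 0.
Definition pointed_closed_convex_cone_int (C : set V) : Prop :=
  is_cone C /\ closed C /\ convex_set C /\ pointed C /\ interior C !=set0.

Definition polar (C : set V) : set V := [set y | forall x, C x -> dotp x y <= 0].

(* Omega_{C°} = S^{n-1} ∩ int C° *)
Definition Omega (C : set V) : set V := [set v | enorm v = 1] `&` interior (polar C).

Definition supp (A : set V) (v : V) : \bar R :=
  ereal_sup [set (dotp x v)%:E | x in A].

Definition halfsp (v : V) (alpha : \bar R) : set V :=
  [set x | ((dotp x v)%:E <= alpha)%E].

Definition bounded_set (A : set V) : Prop := exists M : R, forall x, A x -> enorm x <= M.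

Definition C_asymptotic (C A : set V) : Prop :=
  ~ bounded_set A /\ closed A /\ convex_set A /\ A `<=` C /\ interior A !=set0 /\
  ~ A 0 /\
  (forall eps : R, 0 < eps -> exists M : R,
     forall x, bdry A x -> M < enorm x -> edist x (bdry C) < eps).

Definition rec_cone (E : set V) : set V := [set x | forall e, E e -> E (e + x)].

Definition C_pseudo_cone (C E : set V) : Prop :=
  E !=set0 /\ closed E /\ convex_set E /\ ~ E 0 /\
  (forall x (l : R), E x -> 1 <= l -> E (l *: x)) /\ rec_cone E = C.

End Defs.

(* Main.v *)
Require Import Defs.
From HB Require Import structures.
From mathcomp Require Import all_boot all_order all_algebra.
From mathcomp Require Import all_classical all_reals all_analysis.
From mathcomp Require Import ring lra.
Import Order.TTheory GRing.Theory Num.Theory.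
Import numFieldNormedType.Exports.
Local Open Scope classical_set_scope.
Local Open Scope ring_scope.

Section Basic.
Context {R : realType} {n : nat}.
Local Notation V := 'rV[R]_n.
Implicit Types x y z : V.

Lemma dotpC x y : dotp x y = dotp y x.
Proof. by apply: eq_bigr => i _; rewrite mulrC. Qed.

Lemma dotpDl x y z : dotp (x + y) z = dotp x z + dotp y z.
Proof. by rewrite /dotp -big_split; apply: eq_bigr => i _; rewrite mxE mulrDl. Qed.

Lemma dotpZl (k : R) x y : dotp (k *: x) y = k * dotp x y.
Proof. by rewrite /dotp mulr_sumr; apply: eq_bigr => i _; rewrite mxE mulrA. Qed.

Lemma dotpNl x y : dotp (- x) y = - dotp x y.
Proof. by rewrite -scaleN1r dotpZl mulN1r. Qed.

Lemma dotpBl x y z : dotp (x - y) z = dotp x z - dotp y z.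
Proof. by rewrite dotpDl dotpNl. Qed.

Lemma dotp0l y : dotp 0 y = 0.
Proof. by rewrite -(scale0r (0:V)) dotpZl mul0r. Qed.

Lemma dotpDr x y z : dotp x (y + z) = dotp x y + dotp x z.
Proof. by rewrite dotpC dotpDl !(dotpC x). Qed.
Lemma dotpZr (k : R) x y : dotp x (k *: y) = k * dotp x y.
Proof. by rewrite dotpC dotpZl dotpC. Qed.
Lemma dotpNr x y : dotp x (- y) = - dotp x y.
Proof. by rewrite dotpC dotpNl dotpC. Qed.
Lemma dotpBr x y z : dotp x (y - z) = dotp x y - dotp x z.
Proof. by rewrite dotpDr dotpNr. Qed.
Lemma dotp0r y : dotp y 0 = 0.
Proof. by rewrite dotpC dotp0l. Qed.

Lemma dotpsumr x (I : Type) (s : seq I) (w : I -> V) :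
  dotp x (\sum_(i <- s) w i) = \sum_(i <- s) dotp x (w i).
Proof.
elim: s => [|a s IH]; first by rewrite !big_nil dotp0r.
by rewrite !big_cons dotpDr IH.
Qed.

Lemma dotp_ge0 x : 0 <= dotp x x.
Proof. by apply: sumr_ge0 => i _; rewrite -expr2 sqr_ge0. Qed.

Lemma coord_sq_le x i : x ord0 i ^+ 2 <= dotp x x.
Proof.
rewrite /dotp (bigD1 i) //= -expr2 lerDl.
by apply: sumr_ge0 => j _; rewrite -expr2 sqr_ge0.
Qed.

Lemma dotp_eq0 x : dotp x x = 0 -> x = 0.
Proof.
move=> h; apply/rowP => i; rewrite mxE.
have := coord_sq_le x i; rewrite h => /(le_trans (sqr_ge0 (x ord0 i))) _.
by apply/eqP; rewrite -sqrf_eq0 eq_le sqr_ge0 andbT; have := coord_sq_le x i; rewrite h.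
Qed.

Lemma dotp_gt0 x : x != 0 -> 0 < dotp x x.
Proof.
move=> xn0; rewrite lt_neqAle dotp_ge0 andbT eq_sym; apply/negP => /eqP/dotp_eq0 h.
by rewrite h eqxx in xn0.
Qed.

Lemma coord_le_norm x i : `|x ord0 i| <= `|x|.
Proof.
rewrite [leRHS]/Num.Def.normr /= mx_normrE; apply/bigmax_geP; right; exists (ord0, i) => //.
Qed.

Lemma norm_le_enorm x : `|x| <= enorm x.
Proof.
have [x0|] := eqVneq `|x| 0.
  by rewrite x0 /enorm sqrtr_ge0.
move=> /(@mx_norm_neq0 R 1 n) [[i j] h].
rewrite [leLHS](_ : _ = `|x i j|); last exact: h.
rewrite (ord1 i) /enorm -(sqrtr_sqr (x ord0 j)).
by rewrite ler_sqrt ?coord_sq_le // dotp_ge0.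
Qed.

Lemma dotp_bound x y : `|dotp x y| <= n%:R * (`|x| * `|y|).
Proof.
rewrite /dotp (le_trans (ler_norm_sum _ _ _)) //.
rewrite mulr_natl.
have -> : (`|x| * `|y|) *+ n = \sum_(i < n) (`|x| * `|y|).
  by rewrite sumr_const card_ord.
apply: ler_sum => i _; rewrite normrM.
by apply: ler_pM => //; apply: coord_le_norm.
Qed.

Lemma enorm_le x : enorm x <= n%:R * `|x|.
Proof.
rewrite /enorm -(@ger0_norm _ (n%:R * `|x|)) ?mulr_ge0 //.
rewrite -sqrtr_sqr ler_sqrt ?sqr_ge0 //.
have h := le_trans (ler_norm _) (dotp_bound x x).
apply: (le_trans h).
have a0 : 0 <= `|x| * `|x| by rewrite mulr_ge0.
have hn : (n%:R : R) <= n%:R ^+ 2.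
  case: (n) => [|m]; first by rewrite expr2 mul0r.
  by rewrite expr2 ler_peMl // ler1n.
rewrite exprMn (expr2 `|x|).
exact: ler_wpM2r.
Qed.

Lemma enorm_ge0 x : 0 <= enorm x.
Proof. exact: sqrtr_ge0. Qed.

Lemma enormZ (k : R) x : 0 <= k -> enorm (k *: x) = k * enorm x.
Proof.
move=> k0; rewrite /enorm dotpZl dotpZr mulrA sqrtrM ?mulr_ge0 //.
by rewrite -expr2 sqrtr_sqr ger0_norm.
Qed.

Lemma enorm_gt0 x : x != 0 -> 0 < enorm x.
Proof. by move=> /dotp_gt0 h; rewrite /enorm sqrtr_gt0. Qed.

End Basic.
Section Topo.
Context {R : realType} {n : nat}.
Local Notation V := 'rV[R]_n.

Lemma nbhsP (x : V) (S : set V) :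
  nbhs x S <-> exists2 e : R, 0 < e & forall y, `|y - x| < e -> S y.
Proof.
rewrite nbhs_ballP; split=> [[e e0 he]|[e e0 he]]; exists e => //.
  move=> y hy; apply: he; rewrite -ball_normE /ball_ /= distrC //.
move=> y; rewrite -ball_normE /ball_ /= distrC; exact: he.
Qed.

Lemma closureP (x : V) (S : set V) :
  (forall e : R, 0 < e -> exists y, S y /\ `|y - x| < e) -> closure S x.
Proof.
move=> h B /nbhsP [e e0 he]; have [y [Sy hy]] := h e e0.
by exists y; split => //; apply: he.
Qed.

Lemma closedP (x : V) (S : set V) : closed S ->
  (forall e : R, 0 < e -> exists y, S y /\ `|y - x| < e) -> S x.
Proof. by move=> cS h; apply: cS; apply: closureP. Qed.

End Topo.

Section Geo.
Variables (R : realType) (n : nat) (C A : set 'rV[R]_n).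
Local Notation V := 'rV[R]_n.
Hypothesis n1 : (1 <= n)%N.
Hypothesis C0 : C 0.
Hypothesis Csc : forall x (l : R), C x -> 0 <= l -> C (l *: x).
Hypothesis Cadd : forall x y, C x -> C y -> C (x + y).
Hypothesis Ccl : closed C.
Hypothesis Cpt : pointed C.
Hypothesis Acl : closed A.
Hypothesis Acvx : Defs.convex_set A.
Hypothesis AC : A `<=` C.
Hypothesis Aint : interior A !=set0.

Lemma exists_nz : exists z : V, z != 0.
Proof.
exists (const_mx 1); apply/eqP => /rowP /(_ (Ordinal n1)); rewrite !mxE.
by move/eqP; rewrite oner_eq0.
Qed.

Lemma zero_bdryC : bdry C 0.
Proof.
split; first exact: subset_closure.
move=> /nbhsP [e ep he].
have [z zn0] := exists_nz.
have zp : 0 < `|z| by rewrite normr_gt0.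
pose y := (e / (2 * `|z|)) *: z.
have ny : `|y| < e.
  rewrite normrZ ger0_norm ?divr_ge0 ?mulr_ge0 ?ltW //.
  have -> : e / (2 * `|z|) * `|z| = e / 2.
    by field; rewrite gt_eqF.
  lra.
have Cy : C y by apply: he; rewrite subr0.
have Cny : C (- y) by apply: he; rewrite subr0 normrN.
have := Cpt _ Cy Cny => /eqP; rewrite scaler_eq0 (negbTE zn0) orbF.
by rewrite mulf_eq0 invr_eq0 mulf_eq0 !gt_eqF //= ltr0n.
Qed.

Lemma A_nonempty : exists e, A e.
Proof. by case: Aint => x /nbhs_singleton Ax; exists x. Qed.

Lemma rec_sub : rec_cone A `<=` C.
Proof.
move=> d hd; have [e Ae] := A_nonempty.
have hk : forall k : nat, A (e + k%:R *: d).
  elim=> [|k IH]; first by rewrite scale0r addr0.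
  by rewrite -natr1 scalerDl scale1r addrA; apply: hd.
apply: closedP => // eps eps0.
pose k := (Num.truncn (`|e| / eps)).+1.
have hk1 : `|e| / eps < k%:R by apply: truncnS_gt.
have kp : (0 : R) < k%:R by rewrite ltr0n.
exists (k%:R^-1 *: (e + k%:R *: d)); split.
  by apply: Csc; [apply: AC; apply: hk | rewrite invr_ge0 ltW].
rewrite scalerDr scalerA mulVf ?gt_eqF // scale1r addrK normrZ.
rewrite ger0_norm ?invr_ge0 ?ltW // mulrC ltr_pdivrMr //.
by rewrite -ltr_pdivrMl // mulrC.
Qed.

Lemma base_indep a c : A a -> (forall t : R, 0 <= t -> A (a + t *: c)) ->
  forall e (t : R), A e -> 0 <= t -> A (e + t *: c).
Proof.
move=> Aa hac e t Ae t0.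
apply: closedP => // eps eps0.
have d0 : 0 <= `|a - e| by [].
pose l := eps / (eps + `|a - e|).
have l0 : 0 < l by rewrite divr_gt0 // ltr_wpDr.
have l1 : l <= 1 by rewrite ler_pdivrMr ?ltr_wpDr // mul1r lerDl.
exists (l *: (a + (t / l) *: c) + (1 - l) *: e); split.
  apply: Acvx => //; last by rewrite (ltW l0) l1.
  by apply: hac; rewrite divr_ge0 // ltW.
have -> : l *: (a + (t / l) *: c) + (1 - l) *: e - (e + t *: c) = l *: (a - e).
  apply/rowP => i; rewrite !mxE; field; exact: lt0r_neq0.
rewrite normrZ ger0_norm ?ltW // /l.
rewrite mulrAC ltr_pdivrMr ?ltr_wpDr // ltr_pM2l //.
by rewrite ltrDr.
Qed.

Hypothesis Aunb : ~ Defs.bounded_set A.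
Hypothesis Aasym : forall eps : R, 0 < eps -> exists M : R,
     forall x, bdry A x -> M < enorm x -> Defs.edist x (bdry C) < eps.

Lemma unbounded_norm (K : R) : exists a, A a /\ K < `|a|.
Proof.
apply: contrapT => hn; apply: Aunb; exists (n%:R * K) => x Ax.
apply: (le_trans (enorm_le x)); apply: ler_wpM2l => //.
by rewrite leNgt; apply/negP => hK; apply: hn; exists x.
Qed.

Lemma ray_int e0 c (rho r : R) : 0 < rho -> (forall y, `|y - e0| < rho -> A y) ->
  0 < r -> (forall y, `|y - c| < r -> C y) -> forall t : R, 0 <= t -> A (e0 + t *: c).
Proof.
move=> rho0 hrho r0 hr t1 t10.
apply: contrapT => Hn.
have Ae0 : A e0 by apply: hrho; rewrite subrr normr0.
have nc0 : 0 <= `|c| by [].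
have c1 : 0 < `|c| + 1 by lra.
pose s0 := rho / (2 * (`|c| + 1)).
have s00 : 0 < s0 by rewrite divr_gt0 // mulr_gt0 // ltr_wpDl.
pose eps := s0 * r.
have eps0 : 0 < eps by rewrite mulr_gt0.
have [M HM] := Aasym _ eps0.
pose K := 2 * (M * ((r + `|c|) / r)) + `|e0|.
have [a [Aa Ka]] := unbounded_norm K.
pose p := 2^-1 *: (e0 + a).
have pball : forall y, `|y - p| < rho / 2 -> A y.
  move=> y hy.
  have -> : y = 2^-1 *: (e0 + 2 *: (y - p)) + (1 - 2^-1) *: a.
    by apply/rowP => i; rewrite /p !mxE; field.
  apply: Acvx => //; last by lra.
  apply: hrho; rewrite addrC addKr normrZ ger0_norm //; lra.
have Hps : forall s, 0 <= s <= s0 -> A (p + s *: c).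
  move=> s /andP [s0' ss0]; apply: pball; rewrite addrC addKr normrZ ger0_norm //.
  apply: (@le_lt_trans _ _ (s0 * `|c|)); first by apply: ler_wpM2r.
  have e1 : s0 * (`|c| + 1) = rho / 2.
    by rewrite /s0; field; rewrite gt_eqF // ltr_wpDl.
  lra.
have [T [T0 hT]] : exists T, 0 <= T /\ ~ A (p + T *: c).
  apply: contrapT => hn; apply: Hn.
  apply: (@base_indep p c) => // [|t t0]; first by have := Hps 0; rewrite scale0r addr0; apply; rewrite lexx ltW.
  by apply: contrapT => hn'; apply: hn; exists t.
pose S := [set s | 0 <= s /\ A (p + s *: c)].
have SltT : forall s, S s -> s < T.
  move=> s [s_ge0 As]; rewrite ltNge; apply/negP => Ts; apply: hT.
  have [s00'|spos] := eqVneq s 0.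
    have T00 : T = 0 by apply/eqP; rewrite eq_le T0 andbT -s00'.
    by rewrite T00 scale0r addr0; have := Hps 0; rewrite scale0r addr0; apply; rewrite lexx ltW.
  have sp : 0 < s by rewrite lt_neqAle eq_sym spos.
  have -> : p + T *: c = (T / s) *: (p + s *: c) + (1 - T / s) *: p.
    by apply/rowP => i; rewrite !mxE; field; rewrite gt_eqF.
  apply: Acvx => //; first by have := Hps 0; rewrite scale0r addr0; apply; rewrite lexx ltW.
  by rewrite divr_ge0 //= ler_pdivrMr // mul1r.
have S0 : S s0 by split; [exact: ltW | apply: Hps; rewrite lexx ltW].
have hsS : has_sup S by split; [exists s0 | exists T => s /SltT /ltW].
pose tau := sup S.
have taus0 : s0 <= tau by apply: sup_upper_bound.
have tau0 : 0 < tau by apply: lt_le_trans taus0.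
have tau0' : 0 <= tau := ltW tau0.
pose b := p + tau *: c.
have clb : closure A b.
  apply: closureP => e ep.
  have e'0 : 0 < e / (`|c| + 1) by rewrite divr_gt0 // ltr_wpDl.
  have [s [s_ge0 As] hs] := sup_adherent e'0 hsS.
  have stau : s <= tau by apply: sup_upper_bound.
  rewrite -/tau in hs.
  exists (p + s *: c); split => //.
  have -> : p + s *: c - b = (s - tau) *: c.
    by apply/rowP => i; rewrite /b !mxE; ring.
  rewrite normrZ.
  apply: (@le_lt_trans _ _ ((tau - s) * (`|c| + 1))).
    by rewrite distrC ger0_norm ?subr_ge0 //; apply: ler_wpM2l; rewrite ?subr_ge0 //; lra.
  have h : tau - s < e / (`|c| + 1) by lra.
  by move: h; rewrite ltr_pdivlMr.
have nintb : ~ interior A b.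
  move=> /nbhsP [e ep he].
  pose d := e / (2 * (`|c| + 1)).
  have d0 : 0 < d by rewrite divr_gt0 // mulr_gt0 // ltr_wpDl.
  have : S (tau + d).
    split; first by rewrite addr_ge0 // ltW.
    apply: he.
    have -> : p + (tau + d) *: c - b = d *: c.
      by apply/rowP => i; rewrite /b !mxE; ring.
    rewrite normrZ ger0_norm ?ltW //.
    rewrite /d mulrAC ltr_pdivrMr ?mulr_gt0 ?ltr_wpDl // ltr_pM2l //; nra.
  by move/sup_upper_bound => /(_ hsS); rewrite -/tau; lra.
have ballC : forall y, `|y - b| < tau * r -> C y.
  move=> y hy.
  have -> : y = p + tau *: (c + tau^-1 *: (y - b)).
    by apply/rowP => i; rewrite /b !mxE; field; rewrite gt_eqF.
  apply: Cadd.
    by apply: AC; apply: pball; rewrite subrr normr0; lra.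
  apply: Csc; last exact: ltW.
  apply: hr.
  have -> : c + tau^-1 *: (y - b) - c = tau^-1 *: (y - b).
    by apply/rowP => i; rewrite !mxE; ring.
  rewrite normrZ ger0_norm ?invr_ge0 ?ltW //.
  by rewrite mulrC ltr_pdivrMr // mulrC.
have lbC : forall y, bdry C y -> tau * r <= `|b - y|.
  move=> y [_ nyi]; rewrite leNgt; apply/negP => hy; apply: nyi.
  apply/nbhsP; exists (tau * r - `|b - y|); first by rewrite subr_gt0.
  move=> z hz; apply: ballC.
  have := ler_normD (z - y) (y - b).
  have hyb : `|y - b| = `|b - y| := distrC _ _.
  rewrite addrA subrK; lra.
have hed : eps <= Defs.edist b (bdry C).
  apply: lb_le_inf.
    by exists (enorm (b - 0)); exists 0 => //; exact: zero_bdryC.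
  move=> _ [y By <-]; apply: (le_trans _ (norm_le_enorm _)).
  apply: (le_trans _ (lbC y By)); apply: ler_wpM2r; lra.
have nb1 : tau * r <= `|b| by have := lbC 0 zero_bdryC; rewrite subr0.
have nb2 : `|p| <= `|b| + tau * `|c|.
  have -> : p = b - tau *: c by rewrite /b addrK.
  have h := ler_normB b (tau *: c).
  by rewrite normrZ ger0_norm // in h.
have np : `|a| - `|e0| <= 2 * `|p|.
  rewrite /p normrZ ger0_norm ?invr_ge0 // mulrA mulfV // mul1r.
  have := ler_normD (- e0) (e0 + a); rewrite addKr normrN; lra.
have Mb : M < `|b|.
  pose Q := M * ((r + `|c|) / r).
  have hQ : Q * r = M * (r + `|c|) by rewrite /Q mulrA divfK ?gt_eqF.
  have hpQ : Q < `|p| by rewrite /K -/Q in Ka; lra.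
  have h3 : `|b| * `|c| >= tau * r * `|c| by apply: ler_wpM2r.
  have h4 : `|p| * r <= `|b| * (r + `|c|) by nra.
  have h5 : Q * r < `|p| * r by rewrite ltr_pM2r.
  have h6 : M * (r + `|c|) < `|b| * (r + `|c|) by lra.
  by rewrite ltr_pM2r ?ltr_wpDr in h6.
have := HM b (conj clb nintb) (lt_le_trans Mb (norm_le_enorm b)).
by lra.
Qed.

Hypothesis Cint : interior C !=set0.

Lemma C_sub_rec : C `<=` rec_cone A.
Proof.
move=> c Cc e Ae.
have [e0 /nbhsP [rho rho0 hrho]] := Aint.
have Ae0 : A e0 by apply: hrho; rewrite subrr normr0.
have [u0 /nbhsP [r0 r00 hr0]] := Cint.
apply: closedP => // eps eps0.
have nu0 : 0 <= `|u0| by [].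
have u1 : 0 < `|u0| + 1 by lra.
pose d := eps / (`|u0| + 1).
have d0 : 0 < d by rewrite divr_gt0.
pose c' := c + d *: u0.
have hc' : forall y, `|y - c'| < d * r0 -> C y.
  move=> y hy.
  have -> : y = c + d *: (u0 + d^-1 *: (y - c')).
    by apply/rowP => i; rewrite /c' !mxE; field; rewrite gt_eqF.
  apply: Cadd => //; apply: Csc; last exact: ltW.
  apply: hr0.
  have -> : u0 + d^-1 *: (y - c') - u0 = d^-1 *: (y - c').
    by apply/rowP => i; rewrite !mxE; ring.
  rewrite normrZ ger0_norm ?invr_ge0 ?(ltW d0) //.
  by rewrite mulrC ltr_pdivrMr // mulrC.
have hray := @ray_int e0 c' rho (d * r0) rho0 hrho (mulr_gt0 d0 r00) hc'.
have Ae1 := @base_indep e0 c' Ae0 hray e 1 Ae ler01.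
exists (e + 1 *: c'); split => //.
have -> : e + 1 *: c' - (e + c) = d *: u0.
  by apply/rowP => i; rewrite /c' !mxE; ring.
rewrite normrZ ger0_norm ?(ltW d0) //.
have : d * (`|u0| + 1) = eps by rewrite /d divfK // gt_eqF.
nra.
Qed.

Lemma rec_eq : rec_cone A = C.
Proof. by apply/seteqP; split; [exact: rec_sub | exact: C_sub_rec]. Qed.

End Geo.

Section Proj.
Context {R : realType} {n : nat}.
Local Notation V := 'rV[R]_n.

Lemma cont_sum (I : Type) (s : seq I) (F : I -> V -> R) :
  (forall i, continuous (F i)) -> continuous (fun y => \sum_(i <- s) F i y).
Proof.
move=> hF; elim: s => [|a s IH].
  rewrite (_ : (fun y => _) = cst 0); first exact: cst_continuous.
  by apply/funext => z; rewrite big_nil.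
rewrite (_ : (fun y => _) = F a + (fun y => \sum_(i <- s) F i y)).
  by move=> y; apply: continuousD; [apply: hF | apply: IH].
by apply/funext => z; rewrite big_cons.
Qed.

Lemma coordB_cont (x : V) i : continuous (fun y : V => (x - y) ord0 i).
Proof.
rewrite (_ : (fun y => _) = cst (x ord0 i) - (fun y : V => y ord0 i)).
  move=> y; apply: continuousB; first exact: cst_continuous.
  exact: coord_continuous.
by apply/funext => z; rewrite !mxE.
Qed.

Lemma phi_cont (x : V) : continuous (fun y : V => dotp (x - y) (x - y)).
Proof.
apply: cont_sum => i y; apply: continuousM; exact: coordB_cont.
Qed.

Lemma dotp_cont (w : V) : continuous (fun y : V => dotp y w).
Proof.
apply: cont_sum => i y; apply: continuousM; last exact: cst_continuous.
exact: coord_continuous.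
Qed.

Lemma dotp_expand (w d : V) (t : R) :
  dotp (w - t *: d) (w - t *: d) = dotp w w - 2 * t * dotp w d + t * t * dotp d d.
Proof. rewrite dotpBl !dotpBr !dotpZl !dotpZr (dotpC d w); ring. Qed.

Lemma proj_exists (E : set V) (x : V) : closed E -> Defs.convex_set E -> E !=set0 ->
  exists p, E p /\ forall a, E a -> dotp (x - p) (a - p) <= 0.
Proof.
move=> Ecl Ecvx [a0 Ea0].
pose phi y := dotp (x - y) (x - y).
pose m := phi a0.
pose E' := E `&` [set y | phi y <= m].
have E'cl : closed E'.
  apply: closedI => //.
  apply: (@preimage_closed _ _ phi [set r | r <= m]); last exact: closed_le.
  by move=> y _; apply: phi_cont.
have m0 : 0 <= m by apply: dotp_ge0.
have E'co : compact E'.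
  apply: (subclosed_compact E'cl (@rV_compact _ n
     (fun i => `[x ord0 i - (m + 1), x ord0 i + (m + 1)]%classic) _)).
    by move=> i; apply: segment_compact.
  move=> y [_ hy] i /=; rewrite in_itv /=.
  have h := le_trans (coord_sq_le (x - y) i) hy.
  rewrite !mxE in h.
  have h2 : `|x ord0 i - y ord0 i| <= m + 1.
    rewrite leNgt; apply/negP => hlt.
    have : (m + 1) ^+ 2 < `|x ord0 i - y ord0 i| ^+ 2.
      by rewrite ltr_pXn2r // ?nnegrE //; lra.
    rewrite real_normK ?num_real // => hh.
    move: h hh; rewrite !expr2 => h hh; nra.
  move: h2; rewrite ler_norml => /andP [h3 h4].
  apply/andP; split; lra.
have [p /set_mem [Ep hpm] pmin] : exists2 p, p \in E' & forall t, t \in E' -> phi p <= phi t.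
  apply: compact_EVT_min => //; first by exists a0; split => //=; apply: lexx.
  by move=> y; apply: continuous_subspaceT => z; apply: phi_cont.
have pmin' : forall a, E a -> phi p <= phi a.
  move=> a Ea; have [ha|ha] := leP (phi a) m.
    by apply: pmin; apply/mem_set; split.
  apply: le_trans (ltW ha); apply: pmin; apply/mem_set; split => //.
  by apply: lexx.
exists p; split => // a Ea.
pose s := dotp (x - p) (a - p).
pose q := dotp (a - p) (a - p).
have q0 : 0 <= q by apply: dotp_ge0.
rewrite leNgt; apply/negP => s0; rewrite -/s in s0.
pose t := s / (s + q).
have t0 : 0 < t by rewrite divr_gt0 // ltr_wpDr.
have t1 : t <= 1 by rewrite ler_pdivrMr ?ltr_wpDr // mul1r lerDl.
have tsq : t * (s + q) = s by rewrite divfK // gt_eqF // ltr_wpDr.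
have Ey : E (t *: a + (1 - t) *: p) by apply: Ecvx => //; rewrite (ltW t0) t1.
have := pmin' _ Ey; rewrite /phi.
have -> : x - (t *: a + (1 - t) *: p) = (x - p) - t *: (a - p).
  by apply/rowP => i; rewrite !mxE; ring.
rewrite dotp_expand -/s -/q.
move=> h.
have h2 : 0 <= t * (t * q - 2 * s) by lra.
have h3 : 0 <= t * q - 2 * s.
  by move: h2; rewrite pmulr_rge0.
have ts : 0 < t * s by rewrite mulr_gt0.
have e1 : t * s + t * q = s by rewrite -mulrDr.
lra.
Qed.

End Proj.

Section PolarInt.
Variables (R : realType) (n : nat) (C : set 'rV[R]_n).
Local Notation V := 'rV[R]_n.
Hypothesis n1 : (1 <= n)%N.
Hypothesis C0 : C 0.
Hypothesis Csc : forall x (l : R), C x -> 0 <= l -> C (l *: x).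
Hypothesis Cadd : forall x y, C x -> C y -> C (x + y).
Hypothesis Ccl : closed C.
Hypothesis Cpt : pointed C.

Lemma C_convex : Defs.convex_set C.
Proof.
move=> x y Cx Cy t /andP [t0 t1].
by apply: Cadd; apply: Csc => //; rewrite subr_ge0.
Qed.

Lemma polar_add u v : polar C u -> polar C v -> polar C (u + v).
Proof.
move=> hu hv x Cx; rewrite dotpDr.
by have := hu x Cx; have := hv x Cx; lra.
Qed.

Lemma polar_scale u (k : R) : polar C u -> 0 <= k -> polar C (k *: u).
Proof.
by move=> hu k0 x Cx; rewrite dotpZr; apply: mulr_ge0_le0 => //; apply: hu.
Qed.

Lemma polar_witness c : C c -> c != 0 ->
  exists w, polar C w /\ dotp c w = -1.
Proof.
move=> Cc cn0.
have [p [Cp hp]] := @proj_exists _ _ C (- c) Ccl C_convex (ex_intro _ 0 C0).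
pose w0 := - c - p.
have pw : polar C w0.
  move=> y Cy; rewrite dotpC.
  by have := hp (p + y) (Cadd _ _ Cp Cy); rewrite addrAC subrr add0r.
have hp1 : dotp w0 p <= 0.
  have := hp (2 *: p) (Csc _ _ Cp (ler0n _ 2)).
  by rewrite (_ : 2 *: p - p = p) //; apply/rowP => i; rewrite !mxE; ring.
have hp2 : 0 <= dotp w0 p.
  by have := hp 0 C0; rewrite add0r dotpNr; lra.
have w0n0 : w0 != 0.
  apply/negP => /eqP h.
  have cp : - c = p by apply/eqP; rewrite -subr_eq0; apply/eqP.
  have Cnc : C (- c) by rewrite cp.
  by move: cn0; rewrite (Cpt _ Cc Cnc) eqxx.
have k0 := dotp_gt0 _ w0n0.
exists ((dotp w0 w0)^-1 *: w0); split.
  by apply: polar_scale => //; rewrite invr_ge0 ltW.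
have hc : dotp c w0 = - dotp w0 w0.
  have hw0 : w0 = - c - p by [].
  clearbody w0.
  have -> : c = - w0 - p by apply/rowP => i; rewrite hw0 !mxE; ring.
  rewrite dotpBl dotpNl (dotpC p w0).
  have -> : dotp w0 p = 0 by apply/eqP; rewrite eq_le hp1 hp2.
  by rewrite subr0.
rewrite dotpZr hc mulrN mulVf //; exact: lt0r_neq0.
Qed.

Lemma polar_int : exists u (rho : R), 0 < rho /\ forall z, `|z - u| < rho -> polar C z.
Proof.
pose K := C `&` [set x : V | `|x| = 1].
have Kcl : closed K.
  apply: closedI => //.
  apply: (@preimage_closed _ _ (fun x : V => `|x|) [set r | r = 1]); last exact: closed_eq.
  by move=> y _; apply: norm_continuous.
have Kco : compact K.
  apply: (subclosed_compact Kcl (@rV_compact _ n (fun i => `[(-1 : R), 1]%classic) _)).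
    by move=> i; apply: segment_compact.
  move=> y [_ hy] i /=; rewrite in_itv /=.
  by have := coord_le_norm y i; rewrite hy ler_norml.
have hw : forall c, exists w, K c -> polar C w /\ dotp c w = -1.
  move=> c; have [Kc|nKc] := pselect (K c); last by exists 0.
  case: Kc => Cc hc.
  have cn0 : c != 0 by rewrite -normr_eq0 hc oner_eq0.
  have [w hw] := polar_witness c Cc cn0; by exists w.
have [wf hwf] := choice hw.
have Kcov : K `<=` cover K (fun c => [set y | dotp y (wf c) < - 2^-1]).
  move=> c Kc; exists c => //=; rewrite (hwf c Kc).2; lra.
have := Kco; rewrite compact_cover => /(_ V K (fun c => [set y | dotp y (wf c) < - 2^-1])).
case.
- move=> c _.
  apply: (@open_comp _ _ (fun y => dotp y (wf c)) [set r : R | r < - 2^-1]).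
    by move=> y _; apply: dotp_cont.
  exact: open_lt.
- exact: Kcov.
move=> D' D'K Kcov'.
pose u := \sum_(i <- finmap.enum_fset D') wf i.
have pol_i : forall i, i \in finmap.enum_fset D' -> polar C (wf i).
  by move=> i iD; have := D'K i iD; rewrite inE => /hwf [].
have pu : polar C u.
  move=> x Cx; rewrite /u dotpsumr big_seq; apply: sumr_le0 => i iD.
  by apply: pol_i.
have Ku : forall c, K c -> dotp c u <= - 2^-1.
  move=> c Kc; have [i iD hi] := Kcov' c Kc.
  rewrite /u dotpsumr (bigD1_seq i) //=.
  have : \sum_(j <- finmap.enum_fset D' | j != i) dotp c (wf j) <= 0.
    rewrite big_seq_cond; apply: sumr_le0 => j /andP [jD _].
    by apply: pol_i; case: Kc.
  by move: hi => /= hi; lra.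
have Cu : forall x, C x -> dotp x u <= - 2^-1 * `|x|.
  move=> x Cx; have [->|xn0] := eqVneq x 0; first by rewrite dotp0l normr0 mulr0.
  have nx : 0 < `|x| by rewrite normr_gt0.
  have Kx : K (`|x|^-1 *: x).
    split; first by apply: Csc => //; rewrite invr_ge0 ltW.
    by rewrite /= normrZ ger0_norm ?invr_ge0 ?ltW // mulVf // gt_eqF.
  have := Ku _ Kx; rewrite dotpZl => h.
  have e : dotp x u = `|x| * (`|x|^-1 * dotp x u) by rewrite mulrA mulfV ?gt_eqF // mul1r.
  have h2 := ler_wpM2l (ltW nx) h.
  rewrite e; lra.
have np : (0 : R) < n%:R by rewrite ltr0n.
exists u, (2 * n%:R)^-1; split; first by rewrite invr_gt0 mulr_gt0.
move=> z hz x Cx.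
have [->|xn0] := eqVneq x 0; first by rewrite dotp0l.
have nx : 0 < `|x| by rewrite normr_gt0.
have -> : z = u + (z - u) by rewrite addrC subrK.
rewrite dotpDr.
have h1 := Cu x Cx.
have h2 := le_trans (ler_norm _) (dotp_bound x (z - u)).
have h3 : n%:R * (`|x| * `|z - u|) < n%:R * (`|x| * (2 * n%:R)^-1).
  by rewrite ltr_pM2l // ltr_pM2l.
have h4 : n%:R * (`|x| * (2 * n%:R)^-1) = 2^-1 * `|x|.
  by field; rewrite gt_eqF.
lra.
Qed.

End PolarInt.

Theorem lemma3p1 (R : realType) (n : nat) (C A : set 'rV[R]_n) :
  (2 <= n)%N ->
  pointed_closed_convex_cone_int C ->
  C_asymptotic C A ->
  C_pseudo_cone C A /\ A = \bigcap_(v in Omega C) halfsp v (supp A v).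
Proof.
move=> n2 [[C0 [Csc Cadd]] [Ccl [Ccvx [Cpt Cint]]]] [Aunb [Acl [Acvx [AC [Aint [A0 Aasym]]]]]].
have n1 : (1 <= n)%N by apply: leq_trans n2.
have Ane : exists e, A e by apply: A_nonempty.
have Crec : C `<=` rec_cone A by apply: C_sub_rec.
have Req : rec_cone A = C by apply: rec_eq.
split.
  split; first by case: Ane => e Ae; exists e.
  do 3 (split => //).
  split => // x l Ax l1.
  have -> : l *: x = x + (l - 1) *: x by apply/rowP => i; rewrite !mxE; ring.
  apply: (Crec _ _ x Ax); apply: Csc; [exact: AC | by rewrite subr_ge0].
apply/seteqP; split.
  move=> x Ax v _; rewrite /halfsp /=.
  by apply: ereal_sup_ubound; exists x.
move=> x hx; apply: contrapT => nAx.
have [p [Ap hp]] := @proj_exists R n A x Acl Acvx Ane.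
pose w := x - p.
have wn0 : w != 0.
  by apply/negP => /eqP h; apply: nAx; have -> : x = p by apply/eqP; rewrite -subr_eq0; apply/eqP.
have hC : polar C w.
  move=> y Cy; rewrite dotpC.
  by have := hp (p + y) (Crec _ Cy _ Ap); rewrite addrAC subrr add0r.
have hA : forall a, A a -> dotp a w <= dotp p w.
  by move=> a Aa; have := hp a Aa; rewrite dotpBr (dotpC _ a) (dotpC _ p) subr_le0.
have [u [rho [rho0 hu]]] : exists u (rho : R), 0 < rho /\ forall z, `|z - u| < rho -> polar C z.
  by apply: polar_int.
have pu : polar C u by apply: hu; rewrite subrr normr0.
pose k := dotp w w.
have k0 : 0 < k by apply: dotp_gt0.
have dxu0 : 0 <= `|dotp x u| by [].
pose eps := k / (`|dotp x u| + 1).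
have eps0 : 0 < eps by rewrite divr_gt0 // ltr_wpDl.
pose v0 := w + eps *: u.
have hav : forall a, A a -> dotp a v0 <= dotp p w.
  move=> a Aa.
  have -> : dotp a v0 = dotp a w + eps * dotp a u by rewrite /v0 dotpDr dotpZr.
  have := pu a (AC a Aa); have := hA a Aa.
  move=> h1 h2; have : eps * dotp a u <= 0 by apply: mulr_ge0_le0 => //; exact: ltW.
  lra.
have hxv : dotp p w < dotp x v0.
  have -> : dotp x v0 = dotp x w + eps * dotp x u by rewrite /v0 dotpDr dotpZr.
  have exw : dotp x w = dotp p w + k.
    by rewrite /k {2}/w dotpBl (dotpC x w) (dotpC p w); ring.
  have h1 : eps * `|dotp x u| < k.
    rewrite /eps mulrAC ltr_pdivrMr ?ltr_wpDl //; nra.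
  have h2 : - `|dotp x u| <= dotp x u by rewrite lerNl; apply: (le_trans (ler_norm _)); rewrite normrN.
  have h3 : - (eps * `|dotp x u|) <= eps * dotp x u.
    by rewrite -mulrN; apply: ler_wpM2l => //; exact: ltW.
  lra.
have v0n0 : v0 != 0.
  apply/negP => /eqP h; have := hav p Ap; move: hxv; rewrite h !dotp0r; lra.
pose en := enorm v0.
have en0 : 0 < en by apply: enorm_gt0.
pose v := en^-1 *: v0.
have Omv : Omega C v.
  split.
    by rewrite /= enormZ ?invr_ge0 ?ltW // mulVf // gt_eqF.
  apply/nbhsP; exists (en^-1 * (eps * rho)).
    by rewrite mulr_gt0 ?invr_gt0 // mulr_gt0.
  move=> z hz.
  have -> : z = en^-1 *: (w + eps *: (u + (eps^-1 * en) *: (z - v))).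
    by apply/rowP => i; rewrite /v /v0 !mxE; field; rewrite !gt_eqF.
  move=> y Cy; rewrite dotpZr; apply: mulr_ge0_le0; first by rewrite invr_ge0 ltW.
  rewrite dotpDr dotpZr.
  have hy1 := hC y Cy.
  have hy2 : dotp y (u + (eps^-1 * en) *: (z - v)) <= 0.
    apply: hu => //.
    have -> : u + (eps^-1 * en) *: (z - v) - u = (eps^-1 * en) *: (z - v).
      by apply/rowP => i; rewrite !mxE; ring.
    rewrite normrZ ger0_norm ?mulr_ge0 ?invr_ge0 ?ltW //.
    have -> : rho = (eps^-1 * en) * (en^-1 * (eps * rho)) by field; rewrite !gt_eqF.
    by rewrite ltr_pM2l // mulr_gt0 ?invr_gt0.
  have : eps * dotp y (u + (eps^-1 * en) *: (z - v)) <= 0.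
    by apply: mulr_ge0_le0 => //; exact: ltW.
  lra.
have := hx v Omv; rewrite /halfsp /= => hle.
have hsup : (supp A v <= (en^-1 * dotp p w)%:E)%E.
  apply: ge_ereal_sup => _ [a Aa <-]; rewrite lee_fin /v dotpZr.
  by apply: ler_wpM2l; [rewrite invr_ge0 ltW | apply: hav].
have := le_trans hle hsup; rewrite lee_fin /v dotpZr.
rewrite ler_pM2l ?invr_gt0 //; lra.
Qed.
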